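(* Let $S$ be an entropy function for a finite set $X$, let $X'\subset X$, let $R$ be a new element not in $X$, $Y:=X'\cup\{R\}$, and let $T$ be the entropy function on $Y$ defined by $T(A):=S(A)$ and $T(A\cup\{R\}):=S(A\cup(X\setminus X'))$ for $A\subseteq X'$. Let $M:\mathbb R^X\to\mathbb R^Y$ be the linear map $(Mf)(x)=f(x)$ for $x\in X'$ and $(Mf)(R)=\sum_{x\in X\setminus X'}f(x)$. Then $F_T=M(F_S)$.
   Context: An entropy function for a finite set $X$ is a function $S:2^X\to[0,\infty)$ with $S(\emptyset)=0$, $S(A)+S(B)\ge S(A\cap B)+S(A\cup B)$ and $S(A)+S(B)\ge S(A\setminus B)+S(B\setminus A)$ for all $A,B\subseteq X$. An entanglement distribution function (EDF) for $S$ is a function $f:X\to\mathbb R$ (a vector in $\mathbb R^X$) with $\big|\sum_{x\in A}f(x)\big|\le S(A)$ for all $A\subseteq X$; $F_S$ denotes the set of all EDFs for $S$ (the entropohedron). *)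

(* Defs.v *)
From HB Require Import structures.
From mathcomp Require Import all_boot all_order all_algebra.
Set Implicit Arguments. Unset Strict Implicit. Unset Printing Implicit Defensive.
Import Order.TTheory GRing.Theory Num.Theory.
Local Open Scope ring_scope.

Definition entropy_function (R : realFieldType) (X : finType) (S : {set X} -> R) : Prop :=
  [/\ S set0 = 0,
      (forall A, 0 <= S A),
      (forall A B, S (A :&: B) + S (A :|: B) <= S A + S B) &
      (forall A B, S (A :\: B) + S (B :\: A) <= S A + S B)].

(* Entanglement distribution function f for S (membership in F_S). *)
Definition EDF (R : realFieldType) (X : finType) (S : {set X} -> R) (f : X -> R) : Prop :=
  forall A : {set X}, `| \sum_(x in A) f x | <= S A.

Definition subX (X : finType) (X' : {set X}) : finType := {x : X | x \in X'}.

(* Y := X' u {R}, where the new element R is represented by None. *)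
Definition Ytype (X : finType) (X' : {set X}) : finType := option (subX X').

Definition coreY (X : finType) (X' : {set X}) (B : {set Ytype X'}) : {set X} :=
  [set val y | y in [set y : subX X' | Some y \in B]].

Definition Tfun (R : realFieldType) (X : finType) (X' : {set X}) (S : {set X} -> R)
  (B : {set Ytype X'}) : R :=
  if None \in B then S (coreY B :|: ~: X') else S (coreY B).

Definition Mmap (R : realFieldType) (X : finType) (X' : {set X}) (f : X -> R)
  (y : Ytype X') : R :=
  match y with
  | Some x => f (val x)
  | None => \sum_(x in ~: X') f x
  end.

(* Main.v *)
Require Import Defs.
From HB Require Import structures.
From mathcomp Require Import all_boot all_order all_algebra.
From mathcomp Require Import lra.
Import Order.TTheory GRing.Theory Num.Theory.
Local Open Scope ring_scope.
Set Implicit Arguments. Unset Strict Implicit. Unset Printing Implicit Defensive.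

Lemma sum_opt (R : nmodType) (T : finType) (G : option T -> R) :
  \sum_(y : option T) G y = G None + \sum_(z : T) G (Some z).
Proof.
rewrite (bigD1 None) //=; congr (_ + _).
rewrite -(big_imset (fun y => G y) (h := Some) (A := predT)); last by move=> x y _ _ [].
apply: eq_bigl => -[z|] /=.
  by apply/esym/imsetP; exists z.
by apply/esym/imsetP => -[].
Qed.

Lemma interval_pick (R : realFieldType) (T : finType) (P : pred T) (L U : T -> R) i0 :
  P i0 -> (forall i j, P i -> P j -> L i <= U j) ->
  exists t, forall i, P i -> L i <= t /\ t <= U i.
Proof.
move=> Pi0 H.
case: (@arg_maxP _ R T i0 P L Pi0) => j Pj Hj.
exists (L j) => i Pi; split; first exact: Hj.
exact: H.
Qed.

Lemma sumU (R : nmodType) (X : finType) (f : X -> R) (A B : {set X}) :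
  [disjoint A & B] -> \sum_(x in A :|: B) f x = \sum_(x in A) f x + \sum_(x in B) f x.
Proof.
move=> dAB; rewrite -bigU //; apply: eq_bigl => x; by rewrite !inE.
Qed.

Lemma sumUI (R : nmodType) (X : finType) (f : X -> R) (A B : {set X}) :
  \sum_(x in A) f x + \sum_(x in B) f x =
  \sum_(x in A :|: B) f x + \sum_(x in A :&: B) f x.
Proof.
rewrite (@big_setID _ _ _ _ (A :|: B) A) setUK setDUl setDv set0U.
rewrite (@big_setID _ _ _ _ B A) setIC.
by rewrite /= addrA addrAC.
Qed.

Lemma sum_ind (R : nmodType) (X : finType) (A : {set X}) a (d : R) :
  \sum_(x in A) (if x == a then d else 0) = if a \in A then d else 0.
Proof.
case: (boolP (a \in A)) => Ha.
  rewrite (bigD1 a) //= eqxx big1 ?addr0 // => x /andP[_ /negbTE ->] //.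
by rewrite big1 // => x xA; case: eqP => // xa; move: Ha; rewrite -xa xA.
Qed.

Definition Inv (R : realFieldType) (X : finType) (S : {set X} -> R) (K : {set X}) (f : X -> R) :=
  forall A : {set X}, [disjoint A & K] ->
    `|\sum_(x in A) f x| <= S A /\ `|\sum_(x in A :|: K) f x| <= S (A :|: K).

Lemma inv_base (R : realFieldType) (X : finType) (S : {set X} -> R) (K : {set X}) (f : X -> R) :
  (#|K| <= 1)%N -> Inv S K f -> EDF S f.
Proof.
move=> hK inv A.
case: (boolP [disjoint A & K]) => dAK; first by case: (inv A dAK).
have : #|K| == 1%N.
  move: hK; rewrite leq_eqVlt ltnS leqn0 => /orP[//|/eqP/cards0_eq K0].
  by move: dAK; rewrite K0 disjoints_subset setC0 subsetT.
case/cards1P => k Kk; subst K.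
move: dAK; rewrite disjoint_sym disjoints1 negbK => kA.
have -> : A = (A :\ k) :|: [set k] by rewrite setUC setD1K.
case: (inv (A :\ k)) => //.
by rewrite disjoint_sym disjoints1 !inE eqxx.
Qed.

Lemma abs_bound (R : realFieldType) (X : finType) (S : {set X} -> R) (f : X -> R) (K A : {set X}) :
  Inv S K f -> [disjoint A & K] -> - S A <= \sum_(x in A) f x <= S A.
Proof. by move=> inv dA; rewrite -ler_norml; case: (inv A dA). Qed.

Section Facts.
Variables (R : realFieldType) (X : finType) (S : {set X} -> R) (K : {set X}) (f : X -> R) (a : X).
Hypothesis HS : entropy_function S.
Hypothesis inv : Inv S K f.
Hypothesis aK : a \in K.

Lemma dmem (A : {set X}) z : [disjoint A & K] -> z \in A -> z \in K = false.
Proof. by move=> dA; apply: disjointFr. Qed.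

Lemma F1 (A B : {set X}) : [disjoint A & K] -> [disjoint B & K] ->
  \sum_(x in A) f x - \sum_(x in B) f x <= S (a |: A) + S (a |: B).
Proof.
move=> dA dB; case: HS => _ _ _ Sd.
have aA : (a \in A) = false by apply/negbTE/negP => /(dmem dA); rewrite aK.
have aB : (a \in B) = false by apply/negbTE/negP => /(dmem dB); rewrite aK.
have e1 : (a |: A) :\: (a |: B) = A :\: B.
  apply/setP => z; rewrite !inE.
  case: (eqVneq z a) => [->|_] /=; last by [].
  by rewrite aA andbF.
have e2 : (a |: B) :\: (a |: A) = B :\: A.
  apply/setP => z; rewrite !inE.
  case: (eqVneq z a) => [->|_] /=; last by [].
  by rewrite aB andbF.
have := Sd (a |: A) (a |: B); rewrite e1 e2 => h.
have dAB : [disjoint A :\: B & K] by apply: disjointWl dA; apply: subsetDl.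
have dBA : [disjoint B :\: A & K] by apply: disjointWl dB; apply: subsetDl.
have /andP[h1 h2] := abs_bound inv dAB.
have /andP[h3 h4] := abs_bound inv dBA.
rewrite (@big_setID _ _ _ _ A B) (@big_setID _ _ _ _ B A) setIC /=.
lra.
Qed.

Ltac zcases A B a dA dB aA aB aK :=
  let z := fresh "z" in let za := fresh "za" in
  let zA := fresh "zA" in let zB := fresh "zB" in
  apply/setP => z; rewrite !inE;
  case: (eqVneq z a) => [->|za]; [rewrite ?aA ?aB ?aK ?eqxx /= // | rewrite ?za /=];
  case zA: (z \in A); try rewrite (dmem dA zA);
  case zB: (z \in B); try rewrite (dmem dB zB);
  try case: (z \in K); rewrite /= ?andbT ?andbF ?orbT ?orbF //.

Lemma F2 (A B : {set X}) : [disjoint A & K] -> [disjoint B & K] ->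
  \sum_(x in A) f x - \sum_(x in B) f x <= S (A :|: K :\ a) + S (B :|: K :\ a).
Proof.
move=> dA dB; case: HS => _ _ _ Sd.
have aA : (a \in A) = false by apply/negbTE/negP => /(dmem dA); rewrite aK.
have aB : (a \in B) = false by apply/negbTE/negP => /(dmem dB); rewrite aK.
have e1 : (A :|: K :\ a) :\: (B :|: K :\ a) = A :\: B by zcases A B a dA dB aA aB aK.
have e2 : (B :|: K :\ a) :\: (A :|: K :\ a) = B :\: A by zcases A B a dA dB aA aB aK.
have := Sd (A :|: K :\ a) (B :|: K :\ a); rewrite e1 e2 => h.
have dAB : [disjoint A :\: B & K] by apply: disjointWl dA; apply: subsetDl.
have dBA : [disjoint B :\: A & K] by apply: disjointWl dB; apply: subsetDl.
have /andP[h1 h2] := abs_bound inv dAB.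
have /andP[h3 h4] := abs_bound inv dBA.
rewrite (@big_setID _ _ _ _ A B) (@big_setID _ _ _ _ B A) setIC /=.
lra.
Qed.

Lemma F3 (A B : {set X}) : [disjoint A & K] -> [disjoint B & K] ->
  `|\sum_(x in A) f x + \sum_(x in B) f x + \sum_(x in K) f x|
     <= S (a |: A) + S (B :|: K :\ a).
Proof.
move=> dA dB; case: HS => _ _ Ss _.
have aA : (a \in A) = false by apply/negbTE/negP => /(dmem dA); rewrite aK.
have aB : (a \in B) = false by apply/negbTE/negP => /(dmem dB); rewrite aK.
have e1 : (a |: A) :&: (B :|: K :\ a) = A :&: B by zcases A B a dA dB aA aB aK.
have e2 : (a |: A) :|: (B :|: K :\ a) = (A :|: B) :|: K by zcases A B a dA dB aA aB aK.
have := Ss (a |: A) (B :|: K :\ a); rewrite e1 e2 => h.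
have dU : [disjoint A :|: B & K].
  by rewrite disjoints_subset subUset -!disjoints_subset dA dB.
have dI : [disjoint A :&: B & K] by apply: disjointWl dA; apply: subsetIl.
have [_ h1] := inv dU.
have /andP[h3 h4] := abs_bound inv dI.
rewrite sumU // in h1.
rewrite sumUI; rewrite ler_norml; move: h1; rewrite ler_norml => /andP[h5 h6].
apply/andP; split; lra.
Qed.
End Facts.

Lemma ext (R : realFieldType) (X : finType) (S : {set X} -> R) :
  entropy_function S -> forall n (K : {set X}) (f : X -> R), #|K| = n -> Inv S K f ->
  exists f' : X -> R, EDF S f' /\ (forall x, x \notin K -> f' x = f x) /\
     \sum_(x in K) f' x = \sum_(x in K) f x.
Proof.
move=> HS; elim=> [|n IH] K f hK inv.
  by exists f; split; [apply: (inv_base _ inv); rewrite hK | ].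
case: n IH hK => [|n] IH hK.
  by exists f; split; [apply: (inv_base _ inv); rewrite hK | ].
have [a aK] : exists a, a \in K by apply/card_gt0P; rewrite hK.
set K' := K :\ a.
have hK' : #|K'| = n.+1.
  by move: hK; rewrite (cardsD1 a K) aK add1n => -[].
have [k kK'] : exists k, k \in K' by apply/card_gt0P; rewrite hK'.
have kK : k \in K by move: kK'; rewrite !inE => /andP[].
have ka : k != a by move: kK'; rewrite !inE => /andP[].
set c := \sum_(x in K) f x.
pose L (A : {set X}) := Num.max (- S (a |: A) - \sum_(x in A) f x)
                              (\sum_(x in A) f x + c - S (A :|: K')).
pose U (A : {set X}) := Num.min (S (a |: A) - \sum_(x in A) f x)
                              (\sum_(x in A) f x + c + S (A :|: K')).
have [t Ht] : exists t, forall A : {set X}, [disjoint A & K] -> L A <= t /\ t <= U A.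
  have P0 : [disjoint (set0 : {set X}) & K] by rewrite disjoints_subset sub0set.
  suff Hp : forall A B : {set X}, [disjoint A & K] -> [disjoint B & K] -> L A <= U B.
    have [t Ht] := @interval_pick R _ (fun A : {set X} => [disjoint A & K]) L U set0 P0 Hp.
    by exists t.
  move=> A B dA dB; rewrite /L /U ge_max !le_min.
  have h1 := F1 HS inv aK dB dA.
  have h2 := F2 HS inv aK dA dB.
  have h3 := F3 HS inv aK dA dB.
  have h4 := F3 HS inv aK dB dA.
  rewrite -/K' -/c in h2 h3 h4.
  move: h3 h4; rewrite !ler_norml => /andP[h3 h3'] /andP[h4 h4'].
  apply/andP; split; apply/andP; split; lra.
have C1 : forall A0 : {set X}, [disjoint A0 & K] ->
    `|\sum_(x in A0) f x + t| <= S (a |: A0).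
  move=> A0 d0; have [] := Ht A0 d0; rewrite /L /U ge_max le_min.
  by move=> /andP[l1 l2] /andP[u1 u2]; rewrite ler_norml; apply/andP; split; lra.
have C2 : forall A0 : {set X}, [disjoint A0 & K] ->
    `|\sum_(x in A0) f x + c - t| <= S (A0 :|: K').
  move=> A0 d0; have [] := Ht A0 d0; rewrite /L /U ge_max le_min.
  by move=> /andP[l1 l2] /andP[u1 u2]; rewrite ler_norml; apply/andP; split; lra.
set d := t - f a.
pose f1 := fun x => f x + (if x == a then d else 0) - (if x == k then d else 0).
have sf1 : forall A : {set X}, \sum_(x in A) f1 x =
    \sum_(x in A) f x + (if a \in A then d else 0) - (if k \in A then d else 0).
  by move=> A; rewrite /f1 sumrB big_split /= !sum_ind.
have inv1 : Inv S K' f1.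
  move=> A dA.
  have kA : (k \in A) = false by apply/negbTE/negP => /(dmem dA); rewrite kK'.
  case aA: (a \in A).
  - set A0 := A :\ a.
    have dA0 : [disjoint A0 & K].
      rewrite disjoints_subset; apply/subsetP => z; rewrite !inE => /andP[za zA].
      by apply/negP => zK; have := dmem dA zA; rewrite !inE za zK.
    have eAK : A :|: K' = A0 :|: K.
      apply/setP => z; rewrite !inE; case: (eqVneq z a) => [->|za]; rewrite ?aA ?aK ?orbT //=.
    split.
      rewrite sf1 aA kA (big_setD1 a) ?aA //=.
      have := C1 A0 dA0; rewrite setD1K ?aA // => h.
      have -> : f a + \sum_(i in A :\ a) f i + d - 0 = \sum_(x in A0) f x + t by rewrite /d; lra.
      exact: h.
    rewrite sf1 !inE aA ka kK orbT /= addrK eAK.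
    by case: (inv A0 dA0).
  - have dA' : [disjoint A & K].
      rewrite disjoints_subset; apply/subsetP => z; rewrite !inE => zA.
      apply/negP => zK; have := dmem dA zA; rewrite !inE zK andbT.
      by case: eqP => // za; move: aA; rewrite -za zA.
    split.
      by rewrite sf1 aA kA subr0 addr0; case: (inv A dA').
    rewrite sf1 !inE aA ka kK orbT eqxx /= addr0.
    have dAK' : [disjoint A & K'] by [].
    rewrite sumU // .
    have ec : c = f a + \sum_(x in K') f x by rewrite /c (big_setD1 a).
    have := C2 A dA'.
    have -> : \sum_(x in A) f x + \sum_(x in K') f x - d = \sum_(x in A) f x + c - t by rewrite ec /d; lra.
    by [].
have [f' [Ef' [Hf' Sf']]] := IH K' f1 hK' inv1.
exists f'; split; first exact: Ef'.
split.
  move=> x xK; rewrite Hf'; last by rewrite !inE (negbTE xK) andbF.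
  rewrite /f1; have -> : (x == a) = false by apply/negbTE/negP => /eqP xa; move: xK; rewrite xa aK.
  have -> : (x == k) = false by apply/negbTE/negP => /eqP xk; move: xK; rewrite xk kK.
  by rewrite addr0 subr0.
rewrite (big_setD1 a aK) Sf' Hf'; last by rewrite !inE eqxx.
have := sf1 K; rewrite aK kK (big_setD1 a aK) -/K' => ->.
by rewrite addrK.
Qed.

Lemma coreY_sub (X : finType) (X' : {set X}) (B : {set Ytype X'}) : coreY B \subset X'.
Proof. by apply/subsetP => x /imsetP [y _ ->]; apply: valP. Qed.

Lemma sumY (R : realFieldType) (X : finType) (X' : {set X}) (h : X -> R) (B : {set Ytype X'}) :
  \sum_(y in B) Mmap h y = \sum_(x in coreY B) h x +
     (if None \in B then \sum_(x in ~: X') h x else 0).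
Proof.
rewrite big_mkcond sum_opt /= addrC; congr (_ + _).
rewrite /coreY big_imset /=; last by move=> x y _ _; apply: val_inj.
by rewrite [RHS]big_mkcond; apply: eq_bigr => z _; rewrite inE.
Qed.

Unset Implicit Arguments.
Set Strict Implicit.

Theorem corollary25 (R : realFieldType) (X : finType) (S : {set X} -> R)
  (X' : {set X}) :
  entropy_function S ->
  forall g : Ytype X' -> R,
    EDF (Tfun S) g <-> exists f : X -> R, EDF S f /\ (forall y, g y = Mmap f y).
Proof.
move=> HS g; split; last first.
  move=> [f [Ef Eg]] B.
  rewrite (eq_bigr (fun y => Mmap f y)) // sumY /Tfun.
  case: (None \in B); last by rewrite addr0.
  rewrite -sumU; first exact: Ef.
  by rewrite disjoints_subset setCK coreY_sub.
move=> Eg.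
have [S0 _ _ _] := HS.
set n := #|~: X'|.
pose f0 := fun x : X => if (insub x : option (subX X')) is Some y then g (Some y)
                        else g None / n%:R.
have gN : n = 0%N -> g None = 0.
  move=> n0; have := Eg [set None]; rewrite big_set1 /Tfun inE eqxx.
  have -> : coreY [set None : Ytype X'] = set0.
    by apply/setP => x; rewrite inE; apply/negP => /imsetP [y]; rewrite !inE.
  by rewrite (cards0_eq n0) setU0 S0 normr_le0 => /eqP.
have Mg : forall y, g y = Mmap f0 y.
  case=> [y|] /=; first by rewrite /f0 valK.
  rewrite (eq_bigr (fun _ => g None / n%:R)); last first.
    by move=> x; rewrite inE => xX; rewrite /f0 insubN.
  rewrite sumr_const -/n; case: (eqVneq n 0%N) => [n0|nn0].
    by rewrite n0 mulr0n gN.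
  by rewrite -(mulr_natr (g None / n%:R) n) divfK // pnatr_eq0.
have inv0 : Inv S (~: X') f0.
  move=> A dA.
  have AX : forall x, x \in A -> x \in X'.
    by move=> x xA; move: (disjointFr dA xA); rewrite inE => /negbFE.
  pose Bb (b : bool) := [set y : Ytype X' | if y is Some z then val z \in A else b].
  have cB : forall b, coreY (Bb b) = A.
    move=> b; apply/setP => x; apply/imsetP/idP => [[z]|xA].
      by rewrite !inE => zA ->.
    by exists (exist _ x (AX x xA)); rewrite // !inE.
  have := Eg (Bb false); have := Eg (Bb true).
  rewrite !(eq_bigr _ (fun y _ => Mg y)) !sumY /Tfun !cB !inE /= addr0 => h1 h2.
  by split => //; rewrite sumU.
have [f [Ef [Hf Sf]]] := ext HS (erefl _) inv0.
exists f; split => //.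
move=> y; rewrite Mg; case: y => [y|] /=; last by rewrite Sf.
by rewrite Hf // inE negbK; apply: valP.
Qed.
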